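(* Let $G$ be the path $P_n$ or the cycle $C_n$ with $n\geq 3$, and let $c_0:V(G)\to\mathbb{Z}$ be any initial chip configuration. Then the sequence of configurations $(c_t)_{t\geq 0}$ produced by the diffusion process is eventually periodic, i.e. there exist integers $t\geq 0$ and $p\geq 1$ with $c_{t+p}=c_t$.
   Context: Diffusion process: for a finite simple graph $G$ and a chip configuration $c_t:V(G)\to\mathbb{Z}$ (negative values allowed), the next configuration is defined simultaneously for every vertex $u$ by $c_{t+1}(u)=c_t(u)-|\{w\in N(u): c_t(u)>c_t(w)\}|+|\{w\in N(u): c_t(u)<c_t(w)\}|$. That is, every vertex sends one chip to each neighbour having strictly fewer chips. *)

(* Defs.v *)
From mathcomp Require Import all_boot all_order all_algebra.
Set Implicit Arguments. Unset Strict Implicit. Unset Printing Implicit Defensive.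
Import Order.TTheory GRing.Theory Num.Theory.
Local Open Scope ring_scope.

Definition simple_graph (T : finType) (e : rel T) : Prop :=
  symmetric e /\ irreflexive e.

Definition config (T : finType) := T -> int.

Definition diffuse (T : finType) (e : rel T) (c : config T) : config T :=
  fun u => c u - (#|[set w | e u w & c w < c u]|)%:Z
               + (#|[set w | e u w & c u < c w]|)%:Z.

Definition diffusion_seq (T : finType) (e : rel T) (c0 : config T) (t : nat)
  : config T := iter t (diffuse e) c0.

Definition path_graph (n : nat) : rel 'I_n :=
  fun i j => ((val i).+1 == val j)%N || ((val j).+1 == val i)%N.

Definition cycle_graph (n : nat) : rel 'I_n :=
  fun i j => (((val i).+1 %% n)%N == val j) || (((val j).+1 %% n)%N == val i).

Arguments path_graph n : clear implicits.
Arguments cycle_graph n : clear implicits.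

(* Main.v *)
Require Import Defs.
From mathcomp Require Import all_boot all_order all_algebra.
From mathcomp Require Import zify.
From Stdlib Require Import FunctionalExtensionality.
Import Order.TTheory GRing.Theory Num.Theory.
Local Open Scope ring_scope.

Section Gen.
Variables (T : finType) (e : rel T).
Hypothesis esym : symmetric e.
Hypothesis deg2 : forall u, (#|[set w | e u w]| <= 2)%N.

Definition Nb u := [set w | e u w].
Definition hi (c : config T) u := #|[set w | e u w & c u < c w]|.
Definition lo (c : config T) u := #|[set w | e u w & c w < c u]|.
Definition hiX (c : config T) u v := #|[set w | e u w & (w != v) && (c u < c w)]|.
Definition loX (c : config T) u v := #|[set w | e u w & (w != v) && (c w < c u)]|.

Lemma diffuseE c u : diffuse e c u = c u - (lo c u)%:Z + (hi c u)%:Z.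
Proof. by []. Qed.

Lemma hi_split c u v : e u v -> hi c u = (((c u < c v)%R : nat) + hiX c u v)%N.
Proof.
move=> euv; rewrite /hi (cardsD1 v) inE euv /=; congr (_ + _)%N.
by apply: eq_card => w; rewrite !inE; case: (w == v); rewrite ?andbF.
Qed.

Lemma lo_split c u v : e u v -> lo c u = (((c v < c u)%R : nat) + loX c u v)%N.
Proof.
move=> euv; rewrite /lo (cardsD1 v) inE euv /=; congr (_ + _)%N.
by apply: eq_card => w; rewrite !inE; case: (w == v); rewrite ?andbF.
Qed.

Lemma X_le1 c u v : e u v -> (hiX c u v + loX c u v <= 1)%N.
Proof.
move=> euv.
have h1 := deg2 u; rewrite (cardsD1 v) inE euv /= in h1.
set H := [set w | e u w & (w != v) && (c u < c w)].
set L := [set w | e u w & (w != v) && (c w < c u)].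
have HL : H :&: L = set0.
  apply/setP => w; rewrite !inE.
  case: (e u w) (w != v) => [] [] //=; apply/negP => /andP [a b].
  by move: (lt_trans a b); rewrite ltxx.
have := cardsU H L; rewrite HL cards0 subn0 => <-.
apply: leq_trans (_ : #|[set w | e u w] :\ v| <= 1)%N; last by lia.
apply: subset_leq_card; apply/subsetP => w; rewrite !inE.
by case/orP => /andP [-> /andP [-> _]].
Qed.

Lemma hi_le c u : (hi c u <= #|Nb u|)%N.
Proof. by apply: subset_leq_card; apply/subsetP => w; rewrite !inE => /andP []. Qed.

Lemma hi0 c u : (forall w, e u w -> c w <= c u) -> hi c u = 0%N.
Proof.
move=> H; apply/eqP; rewrite cards_eq0; apply/eqP/setP => w; rewrite !inE.
by apply/negP => /andP [/H h1 h2]; move: (le_lt_trans h1 h2); rewrite ltxx.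
Qed.

Lemma hiX_pos c u v : (0 < hiX c u v)%N -> exists a, e u a /\ c u < c a.
Proof.
rewrite card_gt0 => /set0Pn [a]; rewrite inE => /andP [h /andP [_ h']]; by exists a.
Qed.

Lemma loX_pos c u v b : e u b -> b != v -> c b < c u -> (0 < loX c u v)%N.
Proof. by move=> h1 h2 h3; rewrite card_gt0; apply/set0Pn; exists b; rewrite inE h1 h2 h3. Qed.

Lemma other_nb u v : e u v -> (2 <= #|Nb u|)%N -> exists b, e u b /\ b != v.
Proof.
move=> euv; rewrite /Nb (cardsD1 v) inE euv /= => h.
have : (0 < #|[set w | e u w] :\ v|)%N by lia.
rewrite card_gt0 => /set0Pn [b]; rewrite !inE => /andP [h1 h2]; by exists b.
Qed.

Definition Inv (M : int) (c : config T) :=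
  [/\ forall u, c u <= M + 1,
      forall u v, e u v -> c u + c v <= 2 * M
    & forall u, c u = M + 1 -> (2 <= #|Nb u|)%N].

Lemma Inv_step M c : Inv M c -> Inv M (diffuse e c).
Proof.
case=> Hb He Hd.
have hiz u : M <= c u -> hi c u = 0%N.
  move=> h; apply: hi0 => w euw; have := He u w euw; have := Hb u; lia.
have pt u : diffuse e c u <= M + 1 /\ (diffuse e c u = M + 1 -> (2 <= #|Nb u|)%N).
  rewrite diffuseE; have := hi_le c u; have := deg2 u; rewrite -/(Nb u).
  have [h|h] := lerP M (c u).
    rewrite (hiz u h) => _ _; have := Hb u; have := Hd u; lia.
  move=> *; lia.
split.
- by move=> u; case: (pt u).
- move=> u v euv.
  rewrite !diffuseE (hi_split c u v euv) (lo_split c u v euv).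
  have evu : e v u by rewrite esym.
  rewrite (hi_split c v u evu) (lo_split c v u evu).
  have Xu := X_le1 c u v euv; have Xv := X_le1 c v u evu.
  have Pu : (0 < hiX c u v)%N -> c u <= M - 1.
    move=> /hiX_pos [a [eua lt]]; have := He u a eua; lia.
  have Pv : (0 < hiX c v u)%N -> c v <= M - 1.
    move=> /hiX_pos [a [eua lt]]; have := He v a eua; lia.
  have Qu : c u = M + 1 -> (0 < loX c u v)%N.
    move=> h; have [b [eub bv]] := other_nb u v euv (Hd u h).
    apply: (loX_pos c _ _ _ eub bv); have := He u b eub; lia.
  have Qv : c v = M + 1 -> (0 < loX c v u)%N.
    move=> h; have [b [eub bv]] := other_nb v u evu (Hd v h).
    apply: (loX_pos c _ _ _ eub bv); have := He v b eub; lia.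
  have := He u v euv; have := Hb u; have := Hb v.
  case: (c u < c v); case: (c v < c u); simpl; lia.
- by move=> u; case: (pt u).
Qed.

Lemma neg_diffuse c u :
  diffuse e (fun w => - c w) u = - diffuse e c u.
Proof.
rewrite !diffuseE /hi /lo.
have -> : [set w | e u w & - c u < - c w] = [set w | e u w & c w < c u].
  by apply/setP => w; rewrite !inE ltrN2.
have -> : [set w | e u w & - c w < - c u] = [set w | e u w & c u < c w].
  by apply/setP => w; rewrite !inE ltrN2.
rewrite /=; move: (#|[set w | e u w & c u < c w]|) (#|[set w | e u w & c w < c u]|) => a b; lia.
Qed.

Lemma Inv_ext M c1 c2 : (forall u, c1 u = c2 u) -> Inv M c1 -> Inv M c2.
Proof.
move=> E [H1 H2 H3]; split.
- by move=> u; rewrite -E.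
- by move=> u v h; rewrite -!E; apply: H2.
- by move=> u; rewrite -E; apply: H3.
Qed.

Lemma Inv_init M c : (forall u, c u <= M) -> Inv M c.
Proof.
move=> H; split.
- by move=> u; have := H u; lia.
- by move=> u v _; have := H u; have := H v; lia.
- by move=> u h; have := H u; lia.
Qed.

Lemma bound_ex (c : config T) : exists M, forall u, c u <= M.
Proof.
exists (\sum_w `|c w|) => u; rewrite (bigD1 u) //=.
apply: le_trans (ler_norm _) _; rewrite lerDl; exact: sumr_ge0.
Qed.

Lemma seqS c0 t : diffusion_seq e c0 t.+1 = diffuse e (diffusion_seq e c0 t).
Proof. by rewrite /diffusion_seq iterS. Qed.

Lemma periodic c0 : exists t p, (1 <= p)%N /\
  diffusion_seq e c0 (t + p) = diffusion_seq e c0 t.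
Proof.
have [M HM] := bound_ex c0.
have [M' HM'] := bound_ex (fun w => - c0 w).
have I1 : forall t, Inv M (diffusion_seq e c0 t).
  elim=> [|t IH]; first exact: Inv_init.
  by rewrite seqS; apply: Inv_step.
have I2 : forall t, Inv M' (fun w => - diffusion_seq e c0 t w).
  elim=> [|t IH]; first exact: Inv_init.
  apply: (Inv_ext M' (diffuse e (fun w => - diffusion_seq e c0 t w))) => [u|].
    by rewrite neg_diffuse seqS.
  exact: Inv_step.
set L := - (M' + 1).
have bnd t u : L <= diffusion_seq e c0 t u <= M + 1.
  case: (I1 t) => [h1 _ _]; case: (I2 t) => [h2 _ _].
  have := h1 u; have := h2 u; rewrite /L; lia.
set K := absz (M + 1 - L)%R.
pose code t : {ffun T -> 'I_K.+1} :=
  [ffun u => inord (absz (diffusion_seq e c0 t u - L)%R)].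
pose N := #|{ffun T -> 'I_K.+1}|.
pose f (i : 'I_N.+1) := code (val i).
have : ~~ injectiveb f.
  apply/negP => /injectiveP inj.
  by have := leq_card f inj; rewrite card_ord ltnn.
case/injectivePn => i [j] ij fij.
have E : forall u, diffusion_seq e c0 i u = diffusion_seq e c0 j u.
  move=> u; have := congr1 (fun g : {ffun T -> 'I_K.+1} => val (g u)) fij.
  rewrite /f /code !ffunE /= !inordK.
  - have := bnd i u; have := bnd j u; lia.
  - have := bnd j u; rewrite /K; lia.
  - have := bnd i u; rewrite /K; lia.
have [lt|lt] : (val i < val j \/ val j < val i)%N.
  by move: ij; rewrite -val_eqE /=; lia.
- exists (val i), (val j - val i)%N; split; first lia.
  rewrite subnKC; last lia.
  by apply: functional_extensionality => u; rewrite E.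
- exists (val j), (val i - val j)%N; split; first lia.
  rewrite subnKC; last lia.
  by apply: functional_extensionality => u; rewrite E.
Qed.

End Gen.

Lemma deg_le2 n (e : rel 'I_n) (f g : 'I_n -> nat) :
  (forall u w, e u w -> val w = f u \/ val w = g u) ->
  forall u, (#|[set w | e u w]| <= 2)%N.
Proof.
move=> H u; rewrite cardE -(size_map val).
apply: (leq_trans (uniq_leq_size (s2 := [:: f u; g u]) _ _)) => //.
  by rewrite (map_inj_uniq val_inj) enum_uniq.
move=> x /mapP [w]; rewrite mem_enum inE => /H [] -> ->; rewrite !inE eqxx ?orbT //.
Qed.

Lemma cyc_aux (n w u : nat) : (w < n)%N -> (w.+1 %% n = u)%N -> w = ((u + n.-1) %% n)%N.
Proof.
move=> wn <-.
have [h|h] : (w.+1 < n \/ w.+1 = n)%N by lia.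
  rewrite (modn_small h). have -> : (w.+1 + n.-1 = w + n)%N by lia.
  by rewrite modnDr modn_small.
rewrite h modnn add0n modn_small; lia.
Qed.

Theorem theorem7 (n : nat) (e : rel 'I_n) :
  (3 <= n)%N ->
  (e = path_graph n \/ e = cycle_graph n) ->
  forall c0 : 'I_n -> int,
    exists (t p : nat), (1 <= p)%N /\
      diffusion_seq e c0 (t + p) = diffusion_seq e c0 t.
Proof.
move=> _ [->|->] c0.
- apply: periodic.
  + by move=> i j; rewrite /path_graph orbC.
  + apply: (deg_le2 n _ (fun u => (val u).+1) (fun u => (val u).-1)).
    move=> u w; rewrite /path_graph => /orP [/eqP h|/eqP h]; lia.
- apply: periodic.
  + by move=> i j; rewrite /cycle_graph orbC.
  + apply: (deg_le2 n _ (fun u => ((val u).+1 %% n)%N)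
                    (fun u => ((val u + n.-1) %% n)%N)).
    move=> u w; rewrite /cycle_graph => /orP [/eqP h|/eqP h].
      by left.
    by right; exact: (cyc_aux _ _ _ (ltn_ord w) h).
Qed.
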